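(* Let $n\geq 0$ and $\beta\geq 2$ be integers and let $i\in\{1,2\}$. Then for every integer $\alpha\geq 0$, $$\overline{B}_{2^{2\alpha+1},3^\beta}(9n+3i)\equiv 0\pmod 4,$$ and for every integer $\alpha\geq 1$, $$\overline{B}_{2^{2\alpha},3^\beta}(9n+3i)\equiv 0\pmod 8.$$
   Context: An overpartition of a nonnegative integer $n$ is a partition of $n$ (a non-increasing sequence of positive integers summing to $n$) in which the first occurrence of each distinct part may be overlined. For relatively prime integers $\ell_1,\ell_2>1$, an $(\ell_1,\ell_2)$-biregular overpartition of $n$ is an overpartition of $n$ none of whose parts is divisible by $\ell_1$ or by $\ell_2$, and $\overline{B}_{\ell_1,\ell_2}(n)$ denotes the number of such overpartitions ($\overline{B}_{\ell_1,\ell_2}(0)=1$). Equivalently, writing $f_k=(q^k;q^k)_\infty=\prod_{m\ge1}(1-q^{km})$ for $|q|<1$, $$\sum_{n\ge0}\overline{B}_{\ell_1,\ell_2}(n)q^n=\frac{f_2\, f_{\ell_1}^2\, f_{\ell_2}^2\, f_{2\ell_1\ell_2}}{f_1^2\, f_{2\ell_1}\, f_{2\ell_2}\, f_{\ell_1\ell_2}^2}.$$ *)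

(* Defs.v *)
From mathcomp Require Import all_boot.
Set Implicit Arguments. Unset Strict Implicit. Unset Printing Implicit Defensive.

Definition bireg_allowed (l1 l2 k : nat) : bool := ~~ (l1 %| k) && ~~ (l2 %| k).

(* ovcount l1 l2 k n = number of overpartitions of n all of whose parts are
   <= k and allowed.  An overpartition is determined by choosing, for each
   part size j, its multiplicity m_j >= 0 and, when m_j >= 1, whether the
   first occurrence of j is overlined (2 choices). *)
Fixpoint ovcount (l1 l2 k n : nat) : nat :=
  match k with
  | 0 => nat_of_bool (n == 0)
  | k'.+1 =>
      ovcount l1 l2 k' n +
      (if bireg_allowed l1 l2 k'.+1 then
         \sum_(1 <= m < (n %/ k'.+1).+1) 2 * ovcount l1 l2 k' (n - m * k'.+1)
       else 0)
  end.

(* \overline{B}_{l1,l2}(n): every part of an overpartition of n is <= n. *)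
Definition Bbar (l1 l2 n : nat) : nat := ovcount l1 l2 n n.

(* Main.v *)
Require Import Defs.
From mathcomp Require Import all_boot zify.
Set Implicit Arguments. Unset Strict Implicit. Unset Printing Implicit Defensive.

Lemma pair_sum K (s : 'I_K -> 'I_K) (P : pred 'I_K) (f : 'I_K -> nat) :
  (forall x, P x -> P (s x)) -> (forall x, P x -> s (s x) = x) ->
  \sum_(x | P x) f x =
  \sum_(x | P x && (x < s x)) (f x + f (s x)) + \sum_(x | P x && (s x == x)) f x.
Proof.
move=> Ps ss.
pose t x := if P x then s x else x.
have tK : involutive t.
  move=> x; rewrite /t; case Px: (P x); last by rewrite Px.
  by rewrite Ps // ss.
rewrite big_split /= (bigID (fun x : 'I_K => x < s x)) /= -addnA; congr (_ + _).
rewrite (bigID (fun x : 'I_K => s x == x)) /= addnC; congr (_ + _); last first.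
  apply: eq_bigl => x; case: (P x) => //=.
  case: eqP => [->|]; first by rewrite ltnn.
  by rewrite andbF.
rewrite (reindex_inj (can_inj tK)) /=.
apply: eq_big => x; rewrite /t; case Px: (P x) => //=.
- rewrite Ps // ss //= -leqNgt.
  case: (ltngtP x (s x)) => //= [lt|e].
    by apply/eqP => h; rewrite -h ltnn in lt.
  by apply/negbTE; rewrite negbK; apply/eqP/val_inj.
- by rewrite Px.
- by rewrite Px.
Qed.

Lemma pair_dvd K (s : 'I_K -> 'I_K) (P : pred 'I_K) (f : 'I_K -> nat) d :
  (forall x, P x -> P (s x)) -> (forall x, P x -> s (s x) = x) ->
  (forall x, P x -> s x != x) ->
  (forall x, P x -> x < s x -> d %| f x + f (s x)) ->
  d %| \sum_(x | P x) f x.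
Proof.
move=> Ps ss sn fd; rewrite (pair_sum f Ps ss).
have -> : \sum_(x | P x && (s x == x)) f x = 0.
  by apply: big1 => x /andP[Px e]; move: (sn x Px); rewrite e.
rewrite addn0; apply: dvdn_sum => x /andP[Px lt]; exact: (fd x Px lt).
Qed.

Notation al := bireg_allowed.

Lemma al_dvd l1 l2 d a : d %| a -> al l1 l2 a -> al l1 l2 d.
Proof.
move=> da /andP[h1 h2]; apply/andP; split; apply/negP => h.
  by move/negP: h1; apply; apply: dvdn_trans da.
by move/negP: h2; apply; apply: dvdn_trans da.
Qed.

Lemma al_pos l1 l2 a : al l1 l2 a -> 0 < a.
Proof. by case: a => //; rewrite /bireg_allowed dvdn0. Qed.

Definition sig3 N (a : 'I_N.+1) : 'I_N.+1 := inord (if 3 %| a then a %/ 3 else 3 * a).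


Lemma sig3_val s b N x (a : 'I_N.+1) : 2 <= b -> 0 < x -> x <= N -> 3 %| x -> ~~ (9 %| x) ->
  al (2 ^ s) (3 ^ b) a && (a %| x) ->
  (sig3 a : nat) = if 3 %| a then a %/ 3 else 3 * a.
Proof.
move=> b2 x0 xN x3 x9 /andP[ala ax].
have ax' : a <= x by apply: dvdn_leq.
have c3 : forall m, coprime 3 m = ~~ (3 %| m) by move=> m; rewrite prime_coprime.
rewrite /sig3 inordK //; case: ifP => h.
  by apply: (leq_ltn_trans (leq_div a 3)); apply: (leq_ltn_trans ax').
have : 3 * a %| x by rewrite Gauss_dvd ?c3 ?h // x3 ax.
by move/(dvdn_leq x0) => le; apply: (leq_ltn_trans le).
Qed.

Lemma sig3_props s b N x (a : 'I_N.+1) : 2 <= b -> 0 < x -> x <= N -> 3 %| x -> ~~ (9 %| x) ->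
  al (2 ^ s) (3 ^ b) a && (a %| x) ->
  [/\ al (2 ^ s) (3 ^ b) (sig3 a) && (sig3 a %| x), sig3 (sig3 a) = a, sig3 a != a &
      (a < sig3 a -> sig3 a = 3 * a :> nat)].
Proof.
move=> b2 x0 xN x3 x9 Pa; have /andP[ala ax] := Pa.
have a0 := al_pos ala.
have c3 : forall m, coprime 3 m = ~~ (3 %| m) by move=> m; rewrite prime_coprime.
have val1 := sig3_val b2 x0 xN x3 x9 Pa.
have P1 : al (2 ^ s) (3 ^ b) (sig3 a) && (sig3 a %| x).
  rewrite val1; case: ifP => h.
    have da : a %/ 3 %| a by apply/dvdnP; exists 3; rewrite mulnC divnK.
    by rewrite (al_dvd da ala) (dvdn_trans da ax).
  rewrite Gauss_dvd ?c3 ?h // x3 ax andbT.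
  move: ala; rewrite /bireg_allowed => /andP[h1 h2].
  have cop : coprime (2 ^ s) 3 by apply: coprimeXl.
  rewrite Gauss_dvdr // h1 /= ?andbT; apply/negP => hh.
  move/negP: x9; apply; apply: dvdn_trans (_ : 3 * a %| x); last by rewrite Gauss_dvd ?c3 ?h // x3 ax.
  exact: (dvdn_trans (@dvdn_exp2l 3 2 b b2) hh).
split => //.
- apply: val_inj; rewrite /= (sig3_val b2 x0 xN x3 x9 P1).
  rewrite val1; case h: (3 %| a).
    have h' : ~~ (3 %| a %/ 3).
      apply/negP => h3; move/negP: x9; apply; apply: dvdn_trans ax.
      by rewrite -(divnK h) (_ : 9 = 3 * 3) // dvdn_pmul2r.
    by rewrite (negbTE h') mulnC divnK.
  by rewrite dvdn_mulr // mulKn.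
- rewrite -(inj_eq val_inj) /= val1; case: ifP => h.
    by rewrite neq_ltn ltn_Pdiv.
  by rewrite neq_ltn; apply/orP; right; lia.
- rewrite val1; case: ifP => // h.
  by rewrite ltnNge leq_div.
Qed.



Definition cc l1 l2 k x := \sum_(d < k.+1) (bireg_allowed l1 l2 d && (d %| x) && (0 < x)).
Definition PP l1 l2 k n := \sum_(a < k.+1)
  (if bireg_allowed l1 l2 a then \sum_(1 <= m < (n %/ a).+1) cc l1 l2 a.-1 (n - m * a) else 0).

Lemma sum_eqmod d (I : Type) (r : seq I) (P : pred I) (F G : I -> nat) :
  (forall i, P i -> F i = G i %[mod d]) ->
  \sum_(i <- r | P i) F i = \sum_(i <- r | P i) G i %[mod d].
Proof.
move=> FG; apply: (big_ind2 (fun a b => a = b %[mod d])) => //.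
  by move=> a b c e H1 H2; rewrite -modnDm H1 H2 modnDm.
Qed.

Lemma cnt_last d n : 0 < d ->
  \sum_(1 <= m < (n %/ d).+1) (n - m * d == 0) = (d %| n) && (0 < n).
Proof.
move=> d0.
case: (posnP (n %/ d)) => [q0|qp].
  rewrite q0 big_geq //.
  case: (posnP n) => [->|np]; first by rewrite andbF.
  suff -> : (d %| n) = false by [].
  apply/negP => /dvdn_leq => /(_ np) dn.
  by move: q0 => /eqP; rewrite -leqn0 leqNgt divn_gt0 // dn.
rewrite big_nat_recr //= big1_seq => [|m /andP[_]]; last first.
  rewrite mem_index_iota => /andP[m1 mq].
  suff : m * d < n by rewrite -subn_gt0; case: (n - m * d).
  apply: (@leq_trans ((n %/ d) * d)); last by rewrite leq_divM.
  by rewrite ltn_mul2r d0.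
have np : 0 < n.
  by move: qp; rewrite divn_gt0 // => /(leq_trans d0).
rewrite add0n np andbT.
by rewrite {1}(divn_eq n d) addKn /dvdn.
Qed.

Lemma cc_rec l1 l2 k n : cc l1 l2 k.+1 n =
  cc l1 l2 k n + (bireg_allowed l1 l2 k.+1 && (k.+1 %| n) && (0 < n)).
Proof. by rewrite /cc big_ord_recr. Qed.

Lemma PP_rec l1 l2 k n : PP l1 l2 k.+1 n = PP l1 l2 k n +
  (if bireg_allowed l1 l2 k.+1 then \sum_(1 <= m < (n %/ k.+1).+1) cc l1 l2 k (n - m * k.+1) else 0).
Proof. by rewrite /PP big_ord_recr. Qed.

Lemma main8 l1 l2 k n :
  ovcount l1 l2 k n = (n == 0) + 2 * cc l1 l2 k n + 4 * PP l1 l2 k n %[mod 8].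
Proof.
elim: k n => [|k IH] n.
  by rewrite /cc /PP !big_ord_recr !big_ord0 /= /bireg_allowed !dvdn0 /= !muln0 !addn0.
rewrite /= cc_rec PP_rec.
case: (bireg_allowed l1 l2 k.+1) => /=; last first.
  by rewrite !addn0 IH.
set S1 := \sum_(1 <= m < _) 2 * _.
set S2 := \sum_(1 <= m < _) cc _ _ _ _.
have HS : S1 = 2 * ((k.+1 %| n) && (0 < n)) + 4 * S2 %[mod 8].
  rewrite /S1 /S2 -cnt_last // !big_distrr /= -big_split /=.
  apply: sum_eqmod => m _.
  rewrite -modnMmr IH modnMmr.
  set a := (_ == 0); set b := cc _ _ _ _; set c := PP _ _ _ _.
  have -> : 2 * (a + 2 * b + 4 * c) = c * 8 + (2 * a + 4 * b) by lia.
  by rewrite modnMDl.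
rewrite -modnDm IH HS modnDm.
congr (_ %% 8); lia.
Qed.


Lemma sum_bool_cond K (b : pred 'I_K) : \sum_(d < K) (b d : nat) = \sum_(d < K | b d) 1.
Proof. by rewrite [RHS]big_mkcond; apply: eq_bigr => d _; case: (b d). Qed.

Definition ccN l1 l2 N x := \sum_(d < N.+1) (al l1 l2 d && (d %| x) && (0 < x)).

Lemma cc_filter l1 l2 N x : 0 < x ->
  ccN l1 l2 N x = \sum_(d < N.+1 | al l1 l2 d && (d %| x)) 1.
Proof. by move=> x0; rewrite /ccN -sum_bool_cond; apply: eq_bigr => d _; rewrite x0 andbT. Qed.

Lemma even3 s b N x : 2 <= b -> 0 < x -> x <= N -> 3 %| x -> ~~ (9 %| x) ->
  2 %| ccN (2 ^ s) (3 ^ b) N x.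
Proof.
move=> b2 x0 xN x3 x9; rewrite cc_filter //.
apply: (@pair_dvd _ (@sig3 N)) => a Pa; case: (sig3_props b2 x0 xN x3 x9 Pa) => //.
Qed.

Lemma div_t q a' : 0 < a' -> (q * (3 * a')) %/ a' + (q * (3 * a')) %/ (3 * a') = q * 4.
Proof. move=> a0. rewrite mulnK ?muln_gt0 //. rewrite mulnA mulnK //. by rewrite -{2}(muln1 q) -mulnDr. Qed.

Lemma S3_dvd s b N : 2 <= b -> 0 < N -> 3 %| N -> ~~ (9 %| N) ->
  4 %| \sum_(a < N.+1 | al (2 ^ s) (3 ^ b) a && (a %| N)) N %/ a.
Proof.
move=> b2 x0 x3 x9.
apply: (@pair_dvd _ (@sig3 N)) => a Pa; case: (sig3_props b2 x0 (leqnn N) x3 x9 Pa) => // P1 _ _ h lt.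
have e := h lt.
have d3 : 3 * a %| N by rewrite -e; case/andP: P1.
have a0 : 0 < a by apply: (al_pos (proj1 (andP Pa))).
rewrite e; move: d3 a0; move: (nat_of_ord a) => a' d3 a0.
case/dvdnP: d3 => q ->.
by rewrite div_t // dvdn_mull.
Qed.

Lemma al_logn s b d : al (2 ^ s) (3 ^ b) d -> logn 2 d < s.
Proof.
move=> ad; have d0 := al_pos ad; move: ad => /andP[h _].
by move: h; rewrite pfactor_dvdn // -ltnNge.
Qed.

Lemma two_dvd s b x d : ~~ odd s -> 2 ^ s %| x -> 0 < x ->
  al (2 ^ s) (3 ^ b) d -> d %| x -> ~~ odd (logn 2 d) -> 2 * d %| x.
Proof.
move=> se sx x0 ad dx ee.
have d0 := al_pos ad; have els := al_logn ad.
have e1 : (logn 2 d).+1 < s.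
  rewrite ltn_neqAle els andbT; apply/negP => /eqP h.
  by move: se; rewrite -h /= ee.
have q0 : 0 < x %/ d by rewrite divn_gt0 // dvdn_leq.
have lx : s <= logn 2 x by rewrite -pfactor_dvdn.
have : logn 2 x = logn 2 d + logn 2 (x %/ d) by rewrite -lognM // mulnC divnK.
move=> lq.
have q2 : 2 %| x %/ d.
  rewrite -(expn1 2) pfactor_dvdn //; lia.
by rewrite -(divnK dx) dvdn_pmul2r.
Qed.

Definition sig2 N (d : 'I_N.+1) : 'I_N.+1 := inord (if odd (logn 2 d) then d %/ 2 else 2 * d).

Lemma sig2_val s b N x (d : 'I_N.+1) : ~~ odd s -> 2 ^ s %| x -> 0 < x -> x <= N ->
  al (2 ^ s) (3 ^ b) d && (d %| x) ->
  (sig2 d : nat) = if odd (logn 2 d) then d %/ 2 else 2 * d.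
Proof.
move=> se sx x0 xN /andP[ad dx]; rewrite /sig2 inordK //.
case: ifP => h.
  by apply: (leq_ltn_trans (leq_div d 2)); apply: (leq_ltn_trans (dvdn_leq x0 dx)).
have := two_dvd se sx x0 ad dx (negbT h).
by move/(dvdn_leq x0) => le; apply: (leq_ltn_trans le).
Qed.

Lemma sig2_props s b N x (d : 'I_N.+1) : 0 < b -> ~~ odd s -> 2 ^ s %| x -> 0 < x -> x <= N ->
  al (2 ^ s) (3 ^ b) d && (d %| x) ->
  [/\ al (2 ^ s) (3 ^ b) (sig2 d) && (sig2 d %| x), sig2 (sig2 d) = d & sig2 d != d].
Proof.
move=> b0 se sx x0 xN Pd; have /andP[ad dx] := Pd.
have d0 := al_pos ad; have els := al_logn ad.
have v1 := sig2_val se sx x0 xN Pd.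
have lg2 : logn 2 2 = 1 by rewrite logn_prime.
case h : (odd (logn 2 d)) in v1.
  have d2 : 2 %| d by rewrite -(expn1 2) pfactor_dvdn //; move: h; case: (logn 2 d).
  have hd : d %/ 2 %| d by apply/dvdnP; exists 2; rewrite mulnC divnK.
  have P1 : al (2 ^ s) (3 ^ b) (sig2 d) && (sig2 d %| x).
    by rewrite v1 (al_dvd hd ad) (dvdn_trans hd dx).
  split => //.
    apply: val_inj; rewrite /= (sig2_val se sx x0 xN P1) v1 logn_div // lg2.
    have -> : odd (logn 2 d - 1) = false.
      by move: h (al_pos ad); case: (logn 2 d) => //= n; rewrite subn1 /= => /negbTE.
    by rewrite mulnC divnK.
  by rewrite -(inj_eq val_inj) /= v1 neq_ltn ltn_Pdiv.
have d2x := two_dvd se sx x0 ad dx (negbT h).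
have P1 : al (2 ^ s) (3 ^ b) (sig2 d) && (sig2 d %| x).
  rewrite v1 d2x andbT.
  have l2 : logn 2 (2 * d) = (logn 2 d).+1 by rewrite lognM // lg2.
  apply/andP; split.
    rewrite pfactor_dvdn ?muln_gt0 // l2 -ltnNge ltn_neqAle els andbT.
    by apply/negP => /eqP e; move: se; rewrite -e /= h.
  apply/negP => h3; move/andP: ad => [_ /negP]; apply.
  by move: h3; rewrite Gauss_dvdr // coprimeXl.
split => //.
  apply: val_inj; rewrite /= (sig2_val se sx x0 xN P1) v1.
  by rewrite lognM // lg2 /= h mulKn.
by rewrite -(inj_eq val_inj) /= v1 neq_ltn; apply/orP; right; lia.
Qed.

Definition sigd N x (d : 'I_N.+1) : 'I_N.+1 := inord (x %/ d).

Lemma sigd_props s b N x (d : 'I_N.+1) : 0 < b -> 0 < x -> x <= N ->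
  ~~ (2 ^ s %| x) -> x %% 3 = 2 ->
  al (2 ^ s) (3 ^ b) d && (d %| x) ->
  [/\ al (2 ^ s) (3 ^ b) (sigd x d) && (sigd x d %| x), sigd x (sigd x d) = d & sigd x d != d].
Proof.
move=> b0 x0 xN sx x3 /andP[ad dx].
have d0 := al_pos ad.
have q0 : 0 < x %/ d by rewrite divn_gt0 // dvdn_leq.
have v1 : (sigd x d : nat) = x %/ d.
  by rewrite /sigd inordK //; apply: (leq_ltn_trans (leq_div x d)).
have qx : x %/ d %| x by apply/dvdnP; exists d; rewrite mulnC divnK.
have P1 : al (2 ^ s) (3 ^ b) (sigd x d) && (sigd x d %| x).
  rewrite v1 qx andbT; apply/andP; split; apply/negP => h.
    by move/negP: sx; apply; apply: dvdn_trans qx.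
  have : 3 %| x.
    apply: dvdn_trans (dvdn_trans h qx).
    by rewrite -{1}(expn1 3) dvdn_exp2l.
  by rewrite /dvdn x3.
split => //.
  apply: val_inj; rewrite /sigd /= inordK; last first.
    by apply: (leq_ltn_trans (leq_div x _)).
  by rewrite v1 divnA // mulKn.
rewrite -(inj_eq val_inj) /= v1; apply/negP => /eqP e.
have : x = d * d by rewrite -{2}e mulnC divnK.
move=> xe; move: x3; rewrite xe -modnMml -modnMmr.
have := ltn_pmod d (isT : 0 < 3).
by case: (d %% 3) => [|[|[|]]].
Qed.

Lemma evenNx s b N x : 0 < b -> ~~ odd s -> 0 < x -> x <= N ->
  x %% 3 = 2 -> 2 %| ccN (2 ^ s) (3 ^ b) N x.
Proof.
move=> b0 se x0 xN x3; rewrite cc_filter //.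
case sx : (2 ^ s %| x).
  apply: (@pair_dvd _ (@sig2 N)) => a Pa; case: (sig2_props b0 se sx x0 xN Pa) => //.
apply: (@pair_dvd _ (@sigd N x)) => a Pa; case: (sigd_props b0 x0 xN (negbT sx) x3 Pa) => //.
Qed.

Lemma prod_even s b N x : 2 <= b -> ~~ odd s -> 3 %| N -> ~~ (9 %| N) -> 0 < x -> x < N ->
  2 %| ccN (2 ^ s) (3 ^ b) N x * ccN (2 ^ s) (3 ^ b) N (N - x).
Proof.
move=> b2 se N3 N9 x0 xN.
have b0 : 0 < b by apply: leq_trans b2.
have y0 : 0 < N - x by rewrite subn_gt0.
have yN : N - x <= N by rewrite leq_subr.
have xN' : x <= N by apply: ltnW.
have N3' : N %% 3 = 0 by apply/eqP.
case x3 : (3 %| x).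
  have y3 : 3 %| N - x by rewrite dvdn_sub.
  case x9 : (9 %| x).
    have y9 : ~~ (9 %| N - x).
      apply/negP => h; move/negP: N9; apply.
      by rewrite -(subnK xN') dvdn_add.
    by rewrite dvdn_mull // even3.
  by rewrite dvdn_mulr // even3 // x9.
have : x %% 3 = 1 \/ x %% 3 = 2.
  move: x3; rewrite /dvdn; have := ltn_pmod x (isT : 0 < 3).
  by case: (x %% 3) => [|[|[|]]] //; auto.
case=> h.
  have : (N - x) %% 3 = 2 by lia.
  by move=> h2; rewrite dvdn_mull // evenNx.
by rewrite dvdn_mulr // evenNx.
Qed.


Lemma mult_reindex a N (g : nat -> nat) : 0 < a ->
  \sum_(1 <= m < (N %/ a).+1) g (m * a) = \sum_(x < N.+1) ((a %| x) && (0 < x)) * g x.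
Proof.
move=> a0; elim: N => [|N IH].
  by rewrite div0n big_geq // big_ord_recr big_ord0 /= andbF.
rewrite big_ord_recr /= -IH divnS //.
case h: (a %| N.+1) => /=; last by rewrite mul0n addn0.
have e := divnK h; rewrite divnS // h /= in e.
by rewrite add1n big_nat_recr //= e mul1n.
Qed.

Definition Tt l1 l2 N (a b x : nat) : bool :=
  al l1 l2 a && al l1 l2 b && (a %| x) && (0 < x) && (b %| N - x) && (0 < N - x).

Lemma cc_widen l1 l2 N (a : nat) y : 0 < a -> a <= N.+1 ->
  cc l1 l2 a.-1 y = \sum_(b < N.+1) (b < a) * (al l1 l2 b && (b %| y) && (0 < y)).
Proof.
move=> a0 aN; rewrite /cc prednK // (big_ord_widen _ (fun d => (al l1 l2 d && (d %| y) && (0 < y)) : nat) aN).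
by rewrite big_mkcond; apply: eq_bigr => b _; case: (b < a); rewrite ?mul1n.
Qed.

Lemma PP_T l1 l2 N : PP l1 l2 N N =
  \sum_(a < N.+1) \sum_(b < N.+1) (b < a) * \sum_(x < N.+1) Tt l1 l2 N a b x.
Proof.
rewrite /PP; apply: eq_bigr => a _.
case ala: (al l1 l2 a); last first.
  by symmetry; apply: big1 => b _; rewrite big1 ?muln0 // => x _; rewrite /Tt ala.
have a0 := al_pos ala.
have aN : a <= N.+1 by apply: ltnW.
under eq_bigr => m _ do rewrite (cc_widen _ _ _ a0 aN).
rewrite exchange_big /=; apply: eq_bigr => b _.
rewrite -big_distrr /=; congr (_ * _).
rewrite (@mult_reindex a N (fun x => (al l1 l2 b && (b %| N - x) && (0 < N - x)) : nat)) //.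
apply: eq_bigr => x _; rewrite mulnb /Tt ala /=.
by case: (al l1 l2 b) (a %| x) (0 < x) (b %| N - x) (0 < N - x) => [] [] [] [] [].
Qed.

Lemma T_sym l1 l2 N a b :
  \sum_(x < N.+1) Tt l1 l2 N a b x = \sum_(x < N.+1) Tt l1 l2 N b a x.
Proof.
rewrite [RHS](reindex_inj rev_ord_inj) /=; apply: eq_bigr => x _.
have xN : x <= N by rewrite -ltnS.
rewrite /Tt subSS (subKn xN).
by case: (al l1 l2 a) (al l1 l2 b) (a %| x) (0 < x) (b %| N - x) (0 < N - x) => [] [] [] [] [] [].
Qed.

Lemma split_sym K (g : 'I_K -> 'I_K -> nat) : (forall a b, g a b = g b a) ->
  \sum_(a : 'I_K) \sum_(b : 'I_K) g a b =
  2 * \sum_(a : 'I_K) \sum_(b : 'I_K) (b < a) * g a b + \sum_(a : 'I_K) g a a.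
Proof.
move=> gs.
have e : forall a : 'I_K, \sum_(b : 'I_K) g a b =
   \sum_(b : 'I_K) (b < a) * g a b + \sum_(b : 'I_K) (a < b) * g a b + g a a.
  move=> a; rewrite -big_split /=.
  rewrite [\sum_(b : 'I_K) g a b](bigD1 a) //= [\sum_(b : 'I_K) (_ + _)](bigD1 a) //= ltnn /= add0n addnC.
  congr (_ + _); apply: eq_bigr => b ba.
  have : (b : nat) != a by [].
  by case: (ltngtP b a) => //; rewrite ?mul1n ?mul0n ?add0n ?addn0.
under eq_bigr => a _ do rewrite e.
rewrite !big_split /= mul2n -addnn; congr (_ + _); congr (_ + _).
rewrite exchange_big /=; apply: eq_bigr => a _; apply: eq_bigr => b _.
by rewrite gs.
Qed.

Lemma F_T l1 l2 N :
  \sum_(a < N.+1) \sum_(b < N.+1) \sum_(x < N.+1) Tt l1 l2 N a b x =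
  \sum_(x < N.+1) cc l1 l2 N x * cc l1 l2 N (N - x).
Proof.
under eq_bigr => a _ do rewrite exchange_big.
rewrite exchange_big; apply: eq_bigr => x _.
rewrite /cc big_distrl; apply: eq_bigr => a _.
rewrite big_distrr; apply: eq_bigr => b _.
rewrite /= mulnb /Tt.
by case: (al l1 l2 a) (al l1 l2 b) (a %| x) (0 < x) (b %| N - x) (0 < N - x) => [] [] [] [] [] [].
Qed.

Lemma diag_T l1 l2 N (a : nat) : 0 < N ->
  (al l1 l2 a && (a %| N) && (0 < N)) + \sum_(x < N.+1) Tt l1 l2 N a a x =
  (al l1 l2 a && (a %| N)) * (N %/ a).
Proof.
move=> N0; case ala: (al l1 l2 a); last first.
  by rewrite /= big1 // => x _; rewrite /Tt ala.
have a0 := al_pos ala.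
case aN: (a %| N); last first.
  rewrite /= big1 // => x _; rewrite /Tt ala /=.
  have xN : x <= N by rewrite -ltnS.
  case ax: (a %| x) => //=; case ay: (a %| N - x) => //=.
  have : a %| x + (N - x) by rewrite dvdn_add.
  by rewrite subnKC // aN.
  by rewrite andbF.
rewrite /= N0 mul1n.
have -> : \sum_(x < N.+1) Tt l1 l2 N a a x =
   \sum_(x < N.+1) ((a %| x) && (0 < x)) * ((a %| N - x) && (0 < N - x) : nat).
  by apply: eq_bigr => x _; rewrite mulnb /Tt ala /= !andbA.
rewrite -(@mult_reindex a N (fun x => ((a %| N - x) && (0 < N - x) : nat))) //.
have q0 : 0 < N %/ a by rewrite divn_gt0 // dvdn_leq.
rewrite big_nat_recr //= divnK // subnn andbF addn0.
rewrite (eq_big_nat _ _ (F2 := fun => 1)); last first.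
  move=> m /andP[m1 mq].
  have lt : m * a < N.
    by rewrite -[X in _ < X](divnK aN) ltn_mul2r a0.
  by rewrite dvdn_sub ?dvdn_mull // subn_gt0 lt.
rewrite sum_nat_const_nat muln1; lia.
Qed.


Lemma cc0 l1 l2 N : cc l1 l2 N 0 = 0.
Proof. by rewrite /cc big1 // => d _; rewrite andbF. Qed.

Lemma F4 s b N : 2 <= b -> ~~ odd s -> 0 < N -> 3 %| N -> ~~ (9 %| N) ->
  4 %| \sum_(x < N.+1) cc (2 ^ s) (3 ^ b) N x * cc (2 ^ s) (3 ^ b) N (N - x).
Proof.
move=> b2 se N0 N3 N9.
set h := fun x : 'I_N.+1 => cc (2 ^ s) (3 ^ b) N x * cc (2 ^ s) (3 ^ b) N (N - x).
have rv : forall x : 'I_N.+1, (rev_ord x : nat) = N - x by move=> x; rewrite /= subSS.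
rewrite (@pair_sum _ (@rev_ord N.+1) xpredT h) // => [|x _]; last by rewrite rev_ordK.
apply: dvdn_add.
  apply: dvdn_sum => x /= lt.
  have xN : x <= N by rewrite -ltnS.
  have hr : h (rev_ord x) = h x by rewrite /h rv subKn // mulnC.
  rewrite hr addnn -mul2n (_ : 4 = 2 * 2) // dvdn_pmul2l //.
  rewrite /h; case: (posnP x) => [->|x0]; first by rewrite cc0.
  apply: prod_even => //; move: lt; rewrite ?subSS; lia.
apply: dvdn_sum => x /= /eqP e.
have e' : N - x = x by rewrite -rv e.
have xN : x <= N by rewrite -ltnS.
have x0 : 0 < x by move: e' N0; case: (nat_of_ord x) => //; rewrite subn0 => ->.
have N2 : N = x * 2 by lia.
have x3 : 3 %| x.
  have : 3 %| x * 2 by rewrite -N2.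
  by rewrite Gauss_dvdl.
have x9 : ~~ (9 %| x).
  apply/negP => h9; move/negP: N9; apply.
  have : 9 %| x * 2 by rewrite dvdn_mulr.
  by rewrite -N2.
rewrite /h e' (_ : 4 = 2 * 2) //; apply: dvdn_mul; exact: even3.
Qed.

Lemma key8 s b N : 2 <= b -> ~~ odd s -> 0 < N -> 3 %| N -> ~~ (9 %| N) ->
  4 %| cc (2 ^ s) (3 ^ b) N N + 2 * PP (2 ^ s) (3 ^ b) N N.
Proof.
move=> b2 se N0 N3 N9.
set l1 := 2 ^ s; set l2 := 3 ^ b.
have hc : 2 %| cc l1 l2 N N by exact: even3.
have hS := S3_dvd s b2 N0 N3 N9.
rewrite -/l1 -/l2 big_mkcond /= in hS.
set S := \sum_(a < N.+1) _ in hS.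
set c := cc l1 l2 N N; set P := PP l1 l2 N N.
set D := \sum_(a < N.+1) \sum_(x < N.+1) Tt l1 l2 N a a x.
have hdiag : c + D = S.
  rewrite /c /cc /D -big_split /=; apply: eq_bigr => a _.
  by rewrite diag_T //; case: (_ && _); rewrite ?mul1n ?mul0n.
have hF : \sum_(x < N.+1) cc l1 l2 N x * cc l1 l2 N (N - x) = 2 * P + D.
  rewrite -F_T (@split_sym _ (fun a b : 'I_N.+1 => \sum_(x < N.+1) Tt l1 l2 N a b x)); last first.
    by move=> a b1; apply: T_sym.
  by rewrite /P PP_T.
have h4 := F4 b2 se N0 N3 N9.
rewrite -/l1 -/l2 hF in h4.
have e : (c + 2 * P) + S = 2 * c + (2 * P + D) by lia.
have : 4 %| (c + 2 * P) + S.
  rewrite e dvdn_add //.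
  by rewrite /c (_ : 4 = 2 * 2) // dvdn_pmul2l.
by rewrite dvdn_addl.
Qed.

Lemma Nfacts n i : (i = 1 \/ i = 2) ->
  [/\ 0 < 9 * n + 3 * i, 3 %| 9 * n + 3 * i & ~~ (9 %| 9 * n + 3 * i)].
Proof.
move=> hi; split.
- case: hi => ->; lia.
- by rewrite dvdn_add // ?dvdn_mulr // (_ : 9 = 3 * 3) // dvdn_mulr.
- by case: hi => ->; rewrite dvdn_addr // dvdn_mulr.
Qed.

Theorem theorem3 (n beta i : nat) :
  2 <= beta -> (i = 1 \/ i = 2) ->
  (forall alpha : nat,
      Bbar (2 ^ (2 * alpha + 1)) (3 ^ beta) (9 * n + 3 * i) = 0 %[mod 4]) /\
  (forall alpha : nat, 1 <= alpha ->
      Bbar (2 ^ (2 * alpha)) (3 ^ beta) (9 * n + 3 * i) = 0 %[mod 8]).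
Proof.
move=> b2 hi; case: (Nfacts n hi).
move: (9 * n + 3 * i) => N N0 N3 N9.
have m8 := fun s => main8 (2 ^ s) (3 ^ beta) N N.
have N0' : (N == 0) = false by apply/negbTE; rewrite -lt0n.
split => [alpha|alpha a1]; rewrite /Bbar.
- have := m8 (2 * alpha + 1); rewrite N0' add0n => e.
  rewrite -(modn_dvdm _ (isT : 4 %| 8)) e modn_dvdm //.
  have hc : 2 %| cc (2 ^ (2 * alpha + 1)) (3 ^ beta) N N by exact: even3.
  apply/eqP; rewrite mod0n; apply/eqP; apply/eqP; rewrite -/(dvdn 4 _) dvdn_add //.
    by rewrite (_ : 4 = 2 * 2) // dvdn_pmul2l.
  by rewrite dvdn_mulr.
- have := m8 (2 * alpha); rewrite N0' add0n => e.
  rewrite e mod0n; apply/eqP; rewrite -/(dvdn 8 _).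
  have se : ~~ odd (2 * alpha) by rewrite oddM.
  have := key8 b2 se N0 N3 N9.
  set c := cc _ _ _ _; set P := PP _ _ _ _ => h.
  have -> : 2 * c + 4 * P = 2 * (c + 2 * P) by lia.
  by rewrite (_ : 8 = 2 * 4) // dvdn_pmul2l.
Qed.
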